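(* Let $\Sigma$ be a rotational $V$-translator in $\mathrm{SL}(2,\mathbb R)$, $V=x\partial_x+y\partial_y$, whose generating curve $\alpha(s)=(x(s),y(s))$ satisfies $x'=2y\cos\varphi$, $y'=2y\sin\varphi$. (1) If $\varphi$ is constant, then $\varphi\equiv\pi/2$ and $\Sigma$ is the rotational surface with generating curve $\alpha(s)=(0,ce^{2s})$, $c>0$ (the straight line $x=0$). (2) If $\Sigma$ has constant mean curvature $H$, then $H=0$ and $\Sigma$ is the surface of item (1).
   Context: $\mathrm{SL}(2,\mathbb R)$ is given global coordinates $(x,y,\theta)\in\mathbb R\times(0,\infty)\times\mathbb R$ via $(x,y,\theta)\mapsto \begin{pmatrix}1&x\\0&1\end{pmatrix}\begin{pmatrix}\sqrt y&0\\0&1/\sqrt y\end{pmatrix}\begin{pmatrix}\cos\theta&\sin\theta\\-\sin\theta&\cos\theta\end{pmatrix}$, with the metric $\langle\,,\rangle=\frac{dx^2+dy^2}{4y^2}+\left(d\theta+\frac{dx}{2y}\right)^2$. Orthonormal frame: $e_1=2y\partial_x-\partial_\theta$, $e_2=2y\partial_y$, $e_3=\partial_\theta$; $V=\frac{1}{2y}(xe_1+ye_2+xe_3)$. A surface with unit normal $N$ and mean curvature $H$ (average of principal curvatures w.r.t. $N$) is a $V$-translator if $H=\langle N,V\rangle$. Rotational surfaces are those parametrized as $(s,t)\mapsto(x(s),y(s),t)$; when $x'=2y\cos\varphi$, $y'=2y\sin\varphi$, one has $N=-\sin\varphi\,e_1+\cos\varphi\,e_2$ and $H=\frac{\varphi'}{2}+\cos\varphi$.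 *)

(* Defs.v *)
From Stdlib Require Import Reals Lra.
From Coquelicot Require Import Coquelicot.
Open Scope R_scope.

(* Euclidean inner product of two vectors written in the orthonormal frame
   (e1,e2,e3) of SL(2,R). *)
Definition frame_inner (a1 a2 a3 b1 b2 b3 : R) : R := a1*b1 + a2*b2 + a3*b3.

(* V = (1/(2y)) (x e1 + y e2 + x e3) at the point (x,y,theta). *)
Definition V1 (x y : R) : R := x / (2*y).
Definition V2 (x y : R) : R := y / (2*y).
Definition V3 (x y : R) : R := x / (2*y).

(* Unit normal N = -sin(phi) e1 + cos(phi) e2 of a rotational surface. *)
Definition N1 (phi : R) : R := - sin phi.
Definition N2 (phi : R) : R := cos phi.
Definition N3 (phi : R) : R := 0.

Definition NV (x y phi : R -> R) (s : R) : R :=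
  frame_inner (N1 (phi s)) (N2 (phi s)) (N3 (phi s))
              (V1 (x s) (y s)) (V2 (x s) (y s)) (V3 (x s) (y s)).

Definition mean_curv (phi : R -> R) (s : R) : R := Derive phi s / 2 + cos (phi s).

Definition in_I (a b : Rbar) (s : R) : Prop := Rbar_lt a s /\ Rbar_lt s b.

Definition rot_generating_curve (a b : Rbar) (x y phi : R -> R) : Prop :=
  Rbar_lt a b /\
  forall s, in_I a b s ->
    0 < y s /\
    is_derive x s (2 * y s * cos (phi s)) /\
    is_derive y s (2 * y s * sin (phi s)) /\
    ex_derive phi s.

Definition V_translator (a b : Rbar) (x y phi : R -> R) : Prop :=
  forall s, in_I a b s -> mean_curv phi s = NV x y phi s.

(* phi is constant phi0 = pi/2 (mod pi, i.e. up to the orientation of the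
   parameter) and the curve is alpha(s) = (0, c e^{2s}) (resp. (0, c e^{-2s})
   for the opposite orientation), c > 0: the straight line x = 0. *)
Definition is_item1_surface (a b : Rbar) (x y phi : R -> R) : Prop :=
  exists phi0 : R,
    (forall s, in_I a b s -> phi s = phi0) /\
    cos phi0 = 0 /\
    exists c : R, 0 < c /\
      forall s, in_I a b s -> x s = 0 /\ y s = c * exp (2 * sin phi0 * s).

(* Main.v *)
Require Import Defs.
From Stdlib Require Import Reals Lra Classical.
From Coquelicot Require Import Coquelicot.
Open Scope R_scope.

Lemma I_loc (a b : Rbar) s : in_I a b s -> locally s (in_I a b).
Proof.
  intros H. apply (open_and (fun u : R => Rbar_lt a u) (fun u : R => Rbar_lt u b)).
  - apply open_Rbar_gt.
  - apply open_Rbar_lt.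
  - exact H.
Qed.

Lemma loc_const_deriv (a b : Rbar) (f : R -> R) C s l :
  in_I a b s -> (forall t, in_I a b t -> f t = C) -> is_derive f s l -> l = 0.
Proof.
  intros Hs Hf Hd.
  assert (Hc : is_derive (fun _ : R => C) s l).
  { apply (is_derive_ext_loc f). 2: exact Hd.
    apply (filter_imp (in_I a b)). intros t Ht; apply Hf; auto. apply I_loc; auto. }
  pose proof (is_derive_unique _ _ _ Hc) as E.
  rewrite Derive_const in E. auto.
Qed.

Lemma const_on_I (a b : Rbar) (f : R -> R) :
  (forall t, in_I a b t -> is_derive f t 0) ->
  forall s s0, in_I a b s -> in_I a b s0 -> f s = f s0.
Proof.
  assert (K : forall s s0, s0 < s -> (forall t, in_I a b t -> is_derive f t 0) ->
      in_I a b s -> in_I a b s0 -> f s = f s0).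
  { intros s s0 Hlt Hd Hs Hs0.
    destruct (MVT_cor2 f (fun _ => 0) s0 s Hlt) as [c [Hc _]].
    - intros c Hc. apply is_derive_Reals. apply Hd. destruct Hs, Hs0. split.
      + apply Rbar_lt_le_trans with s0; auto. simpl; lra.
      + apply Rbar_le_lt_trans with s; auto. simpl; lra.
    - lra. }
  intros Hd s s0 Hs Hs0.
  destruct (Rtotal_order s s0) as [h|[h|h]].
  - symmetry; apply K; auto.
  - subst; auto.
  - apply K; auto.
Qed.

Lemma I_nonempty (a b : Rbar) : Rbar_lt a b -> exists s, in_I a b s.
Proof.
  destruct a as [a| |], b as [b| |]; simpl; intros H; try contradiction.
  - exists ((a+b)/2). split; simpl; lra.
  - exists (a+1). split; simpl; auto; lra.
  - exists (b-1). split; simpl; auto; lra.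
  - exists 0. split; simpl; auto.
Qed.

Lemma translator_eq (a b : Rbar) x y phi s :
  rot_generating_curve a b x y phi -> V_translator a b x y phi -> in_I a b s ->
  y s * Derive phi s + y s * cos (phi s) + x s * sin (phi s) = 0.
Proof.
  intros [_ Hc] Ht Hs. specialize (Ht s Hs). destruct (Hc s Hs) as [Hy _].
  unfold mean_curv, NV, frame_inner, N1, N2, N3, V1, V2, V3 in Ht.
  assert (E : y s / (2 * y s) = 1/2) by (field; lra).
  rewrite E in Ht.
  assert (E2 : x s = x s / (2 * y s) * (2 * y s)) by (field; lra).
  set (q := x s / (2 * y s)) in *.
  assert (ED : Derive phi s = - 2 * sin (phi s) * q - cos (phi s)) by lra.
  rewrite E2, ED. ring.
Qed.

Lemma part1 (a b : Rbar) (x y phi : R -> R) :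
  rot_generating_curve a b x y phi ->
  V_translator a b x y phi ->
  (exists phi0 : R, forall s, in_I a b s -> phi s = phi0) ->
  is_item1_surface a b x y phi.
Proof.
  intros Hc Ht [p0 Hp].
  assert (D0 : forall s, in_I a b s -> Derive phi s = 0).
  { intros s Hs. destruct (proj2 Hc s Hs) as [_ [_ [_ He]]].
    apply (loc_const_deriv a b phi p0 s); auto. apply Derive_correct; auto. }
  assert (G0 : forall s, in_I a b s -> cos p0 * y s + sin p0 * x s = 0).
  { intros s Hs. pose proof (translator_eq a b x y phi s Hc Ht Hs) as E.
    rewrite D0, Hp in E; auto. lra. }
  assert (Hcs : forall s, in_I a b s -> cos p0 = 0).
  { intros s Hs. destruct (proj2 Hc s Hs) as [Hy [Hx [Hy' _]]].
    rewrite Hp in Hx, Hy'; auto.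
    assert (Hd : is_derive (fun t => cos p0 * y t + sin p0 * x t) s
              (cos p0 * (2 * y s * sin p0) + sin p0 * (2 * y s * cos p0))).
    { apply is_derive_Reals. apply derivable_pt_lim_plus;
        apply derivable_pt_lim_scal; apply is_derive_Reals; auto. }
    pose proof (loc_const_deriv a b _ 0 s _ Hs G0 Hd) as Z.
    pose proof (G0 s Hs) as G. pose proof (sin2_cos2 p0) as SC. unfold Rsqr in SC.
    assert (sin p0 * cos p0 = 0) by nra.
    destruct (Rmult_integral _ _ H) as [h|h]; auto.
    rewrite h in G, SC. nra. }
  destruct (I_nonempty a b (proj1 Hc)) as [s0 Hs0].
  pose proof (Hcs s0 Hs0) as C0.
  pose proof (sin2_cos2 p0) as SC. unfold Rsqr in SC. rewrite C0 in SC.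
  exists p0. split; auto. split; auto.
  set (h := fun t => y t * exp (- (2 * sin p0) * t)).
  assert (Hh : forall t, in_I a b t -> is_derive h t 0).
  { intros t Htt. destruct (proj2 Hc t Htt) as [Hy [Hx [Hy' _]]].
    rewrite Hp in Hy'; auto.
    assert (Hd : is_derive h t (2 * y t * sin p0 * exp (- (2 * sin p0) * t)
                   + y t * (exp (- (2 * sin p0) * t) * (- (2 * sin p0) * 1)))).
    { apply is_derive_Reals.
      change h with (mult_fct y (comp exp (fun t => - (2 * sin p0) * t))).
      exact (derivable_pt_lim_mult y _ t _ _ (proj1 (is_derive_Reals _ _ _) Hy')
        (derivable_pt_lim_comp (fun t => - (2 * sin p0) * t) exp t _ _
          (derivable_pt_lim_scal _ _ _ _ (derivable_pt_lim_id t))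
          (derivable_pt_lim_exp (- (2 * sin p0) * t)))). }
    replace 0 with (2 * y t * sin p0 * exp (- (2 * sin p0) * t)
                   + y t * (exp (- (2 * sin p0) * t) * (- (2 * sin p0) * 1))) by ring.
    exact Hd. }
  exists (h s0). split.
  { unfold h. destruct (proj2 Hc s0 Hs0) as [Hy _]. pose proof (exp_pos (- (2 * sin p0) * s0)). nra. }
  intros s Hs. split.
  - pose proof (G0 s Hs) as G. rewrite C0 in G. nra.
  - rewrite <- (const_on_I a b h Hh s s0 Hs Hs0). unfold h.
    rewrite Rmult_assoc, <- exp_plus.
    replace (- (2 * sin p0) * s + 2 * sin p0 * s) with 0 by ring.
    rewrite exp_0; ring.
Qed.

Lemma deriv_cos_comp (phi : R -> R) s :
  ex_derive phi s -> is_derive (fun t => cos (phi t)) s (- sin (phi s) * Derive phi s).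
Proof.
  intros He. apply is_derive_Reals.
  pose proof (proj1 (is_derive_Reals _ _ _) (Derive_correct _ _ He)) as D.
  replace (- sin (phi s) * Derive phi s) with (- sin (phi s) * Derive phi s) by ring.
  exact (derivable_pt_lim_comp phi cos s _ _ D (derivable_pt_lim_cos (phi s)))
    || (eapply derivable_pt_lim_comp; [exact D| apply derivable_pt_lim_cos]).
Qed.

Lemma deriv_sin_comp (phi : R -> R) s :
  ex_derive phi s -> is_derive (fun t => sin (phi t)) s (cos (phi s) * Derive phi s).
Proof.
  intros He. apply is_derive_Reals.
  pose proof (proj1 (is_derive_Reals _ _ _) (Derive_correct _ _ He)) as D.
  exact (derivable_pt_lim_comp phi sin s _ _ D (derivable_pt_lim_sin (phi s))).
Qed.

Theorem mainTheorem4 (a b : Rbar) (x y phi : R -> R) :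
  rot_generating_curve a b x y phi ->
  V_translator a b x y phi ->
  ((exists phi0 : R, forall s, in_I a b s -> phi s = phi0) ->
     is_item1_surface a b x y phi) /\
  (forall H : R, (forall s, in_I a b s -> mean_curv phi s = H) ->
     H = 0 /\ is_item1_surface a b x y phi).
Proof.
  intros Hc Ht. split. { apply part1; auto. }
  intros H HH.
  assert (DH : forall s, in_I a b s -> Derive phi s = 2 * H - 2 * cos (phi s)).
  { intros s Hs. specialize (HH s Hs). unfold mean_curv in HH. lra. }
  assert (E1 : forall s, in_I a b s ->
     2 * H * y s - y s * cos (phi s) + x s * sin (phi s) = 0).
  { intros s Hs. pose proof (translator_eq a b x y phi s Hc Ht Hs) as E.
    rewrite DH in E; auto. lra. }
  assert (A : forall s, in_I a b s -> cos (phi s) * (2 * H * H + 1) = 3 * H).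
  { intros s Hs. destruct (proj2 Hc s Hs) as [Hy [Hx [Hy' He]]].
    assert (Hd : is_derive (fun t => 2 * H * y t - y t * cos (phi t) + x t * sin (phi t)) s
       (2 * H * (2 * y s * sin (phi s))
        - ((2 * y s * sin (phi s)) * cos (phi s) + y s * (- sin (phi s) * Derive phi s))
        + ((2 * y s * cos (phi s)) * sin (phi s) + x s * (cos (phi s) * Derive phi s)))).
    { apply is_derive_Reals.
      pose proof (proj1 (is_derive_Reals _ _ _) Hx) as Dx.
      pose proof (proj1 (is_derive_Reals _ _ _) Hy') as Dy.
      pose proof (proj1 (is_derive_Reals _ _ _) (deriv_cos_comp phi s He)) as Dc.
      pose proof (proj1 (is_derive_Reals _ _ _) (deriv_sin_comp phi s He)) as Ds.
      exact (derivable_pt_lim_plus _ _ s _ _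
        (derivable_pt_lim_minus _ _ s _ _ (derivable_pt_lim_scal _ _ _ _ Dy)
           (derivable_pt_lim_mult _ _ s _ _ Dy Dc))
        (derivable_pt_lim_mult _ _ s _ _ Dx Ds)). }
    pose proof (loc_const_deriv a b _ 0 s _ Hs E1 Hd) as Z.
    pose proof (E1 s Hs) as G. rewrite DH in Z; auto.
    pose proof (sin2_cos2 (phi s)) as SC. unfold Rsqr in SC.
    set (c := cos (phi s)) in *. set (sn := sin (phi s)) in *.
    assert (K : y s * (6 * H - 4 * H * H * c - 2 * c) = 0).
    { set (D := 2 * H - 2 * c) in *.
      assert (Z' : 4 * H * y s * sn + y s * sn * D + x s * c * D = 0) by (rewrite <- Z; ring).
      transitivity (sn * (4 * H * y s * sn + y s * sn * D + x s * c * D)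
         - c * D * (2 * H * y s - y s * c + x s * sn)
         + y s * (4 * H + D) * (1 - (sn * sn + c * c))).
      - unfold D; ring.
      - rewrite Z', G, SC. ring. }
    apply Rmult_integral in K. destruct K as [K|K]; lra. }
  assert (Hpos : 0 < 2 * H * H + 1) by nra.
  set (c0 := 3 * H / (2 * H * H + 1)).
  assert (Cc : forall s, in_I a b s -> cos (phi s) = c0).
  { intros s Hs. unfold c0. pose proof (A s Hs). field_simplify_eq; lra. }
  set (k := 2 * H - 2 * c0).
  assert (Dk : forall s, in_I a b s -> Derive phi s = k).
  { intros s Hs. rewrite DH, Cc; auto. }
  destruct (I_nonempty a b (proj1 Hc)) as [s0 Hs0].
  assert (Kz : k = 0).
  { destruct (Req_dec k 0) as [?|Kn]; auto. exfalso.
    assert (S0 : forall s, in_I a b s -> sin (phi s) = 0).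
    { intros s Hs. destruct (proj2 Hc s Hs) as [_ [_ [_ He]]].
      pose proof (loc_const_deriv a b _ c0 s _ Hs Cc (deriv_cos_comp phi s He)) as Z.
      rewrite Dk in Z; auto. nra. }
    destruct (proj2 Hc s0 Hs0) as [_ [_ [_ He]]].
    pose proof (loc_const_deriv a b _ 0 s0 _ Hs0 S0 (deriv_sin_comp phi s0 He)) as Z.
    rewrite Dk in Z; auto. pose proof (sin2_cos2 (phi s0)) as SC. unfold Rsqr in SC.
    rewrite S0 in SC; auto. nra. }
  assert (Pc : forall s, in_I a b s -> phi s = phi s0).
  { intros s Hs. apply (const_on_I a b phi); auto. intros t Htt. destruct (proj2 Hc t Htt) as [_ [_ [_ He]]].
    rewrite <- Kz, <- (Dk t Htt). apply Derive_correct; auto. }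
  assert (It : is_item1_surface a b x y phi).
  { apply part1; auto. exists (phi s0); auto. }
  split; auto.
  destruct It as [p0 [Hp [Cp _]]].
  rewrite <- (HH s0 Hs0). unfold mean_curv. rewrite Dk, Kz, Hp; auto. rewrite Cp. lra.
Qed.
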